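(* Let $p$ be an odd prime of the form $p = q^2 + 1$ for some integer $q$. Then the sequence $\left(\left\lfloor n^{(p-1)/2}/p \right\rfloor\right)_{n \ge 1}$ is eventually prime-free. In particular, each of the sequences $\left\lfloor n^2/5 \right\rfloor$, $\left\lfloor n^8/17 \right\rfloor$, $\left\lfloor n^{18}/37 \right\rfloor$, $\left\lfloor n^{50}/101 \right\rfloor$, $\left\lfloor n^{98}/197 \right\rfloor$, $\left\lfloor n^{128}/257 \right\rfloor$ ($n \ge 1$) is eventually prime-free.
   Context: A sequence $(a_n)_{n\ge 1}$ of positive integers is called eventually prime-free if there exists an index $n_0$ such that $a_n$ is composite for all $n \ge n_0$. (Here, as in the paper, this is understood as: only finitely many terms $a_n$ are prime.) *)

(* Defs.v *)
From mathcomp Require Import all_boot.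
Definition eventually_prime_free (a : nat -> nat) : Prop :=
  exists n0 : nat, forall n : nat, n0 <= n -> ~~ prime (a n).

Definition floor_seq (e p : nat) : nat -> nat := fun n => n ^ e %/ p.

(* Main.v *)
Require Import Defs.
From mathcomp Require Import all_boot all_solvable.
From mathcomp Require Import zify.

Lemma nprime_mul a b : 1 < a -> 1 < b -> ~~ prime (a * b).
Proof.
move=> a1 b1; apply/negP => /primeP [_ H].
have := H a (dvdn_mulr _ (dvdnn a)); case/orP => /eqP; nia.
Qed.

Lemma np (p s x r : nat) : prime p -> p * s + r * r = x * x -> r < p ->
  3 * p <= x -> ~~ prime s.
Proof.
move=> pp E rp xp.
have p1 := prime_gt1 pp.
have E2 : p * s = (x - r) * (x + r) by nia.
have : p %| (x - r) * (x + r) by rewrite -E2 dvdn_mulr.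
rewrite Euclid_dvdM // => /orP [/dvdnP [c Hc] | /dvdnP [c Hc]].
- have -> : s = c * (x + r).
    apply/eqP; rewrite -(eqn_pmul2l (ltnW p1)) E2 Hc; apply/eqP; nia.
  apply: nprime_mul; nia.
- have -> : s = (x - r) * c.
    apply/eqP; rewrite -(eqn_pmul2l (ltnW p1)) E2 Hc; apply/eqP; nia.
  apply: nprime_mul; nia.
Qed.

Lemma modvals (p n h : nat) : prime p -> p.-1 = 4 * h ->
  let N := n ^ h * n ^ h in
  N %% p = 0 \/ N %% p = 1 \/ N %% p = p.-1.
Proof.
move=> pp ph N.
have p1 := prime_gt1 pp.
have [pn | npn] := boolP (p %| n).
  left; apply/eqP; rewrite -/(dvdn p N) /N dvdn_mulr // dvdn_exp //; lia.
have cop : coprime n p by rewrite coprime_sym prime_coprime.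
have F := Euler_exp_totient cop; rewrite totient_prime // ph in F.
have NN : (N * N) %% p = 1.
  rewrite /N -!expnD; rewrite (modn_small p1) in F; rewrite -F; congr (_ ^ _ %% _); lia.
right.
move: NN; clearbody N; move=> NN.
have yy : ((N %% p) * (N %% p)) %% p = 1 by rewrite modnMml modnMmr NN.
have yp : N %% p < p by rewrite ltn_mod; lia.
move: yy yp; generalize (N %% p) => y yy yp.
have y0 : 0 < y by move: yy; case: (y) => //; rewrite mul0n mod0n.
have : p %| (y - 1) * (y + 1).
  have D := divn_eq (y*y) p; rewrite yy in D.
  move: D; generalize (y * y %/ p) => t D.
  have -> : (y - 1) * (y + 1) = t * p by clear -D y0; nia.
  exact: dvdn_mull.
rewrite Euclid_dvdM // => /orP [H | H].
- left; case E: (y - 1) => [|m]; first by lia.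
  rewrite E in H; have := dvdn_leq (ltn0Sn m) H; rewrite -E; clear -yp; lia.
- right; rewrite addn1 in H; have := dvdn_leq (ltn0Sn _) H.
  clear -yp; lia.
Qed.

Lemma general (p q : nat) : prime p -> odd p -> p = q ^ 2 + 1 ->
     eventually_prime_free (floor_seq ((p - 1) %/ 2) p).
Proof.
move=> pp op pq.
have p1 := prime_gt1 pp.
have eq : ~~ odd q by move: op; rewrite pq oddD oddX /=; case: (odd q).
have [k qk] : exists k, q = 2 * k.
  exists q./2; rewrite -[q in LHS]odd_double_half (negbTE eq) add0n; lia.
have k1 : 0 < k by move: p1; rewrite pq qk; case: k qk => //.
have ee : (p - 1) %/ 2 = (k * k) + (k * k).
  rewrite pq qk; have -> : (2 * k) ^ 2 + 1 - 1 = 2 * (k * k + k * k) by rewrite expnMn; lia.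
  by rewrite mulKn.
exists (3 * p) => n n3.
rewrite /floor_seq ee expnD.
set x := n ^ (k * k).
have xn : n <= x.
  rewrite /x -{1}(expn1 n) leq_pexp2l //; nia.
have h4 : p.-1 = 4 * (k * k) by rewrite pq qk; clear; lia.
have := @modvals p n (k * k) pp h4; rewrite /= -/x.
have E := divn_eq (x * x) p.
have hq : p.-1 = q * q by rewrite pq; clear; lia.
have rp : q < p by rewrite pq; clear; nia.
have x3 : 3 * p <= x by clear -xn n3; lia.
move: E; generalize (x * x %/ p) => s E.
case => [H|[H|H]]; rewrite H in E.
- apply: (@np p s x 0 pp) => //; last by clear -p1; lia.
  rewrite E; clear; nia.
- apply: (@np p s x 1 pp) => //; rewrite E; clear; nia.
- apply: (@np p s x q pp) => //; rewrite E hq; clear; nia.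
Qed.

Theorem theorem10 :
  (forall p q : nat, prime p -> odd p -> p = q ^ 2 + 1 ->
     eventually_prime_free (floor_seq ((p - 1) %/ 2) p)) /\
  eventually_prime_free (floor_seq 2 5) /\
  eventually_prime_free (floor_seq 8 17) /\
  eventually_prime_free (floor_seq 18 37) /\
  eventually_prime_free (floor_seq 50 101) /\
  eventually_prime_free (floor_seq 98 197) /\
  eventually_prime_free (floor_seq 128 257).
Proof.
split; first exact: general.
split; first exact: (@general 5 2).
split; first exact: (@general 17 4).
split; first exact: (@general 37 6).
split; first exact: (@general 101 10).
split; first exact: (@general 197 14).
exact: (@general 257 16).
Qed.
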